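(* Let $N\ge1$ and let $F=(f_1,\ldots,f_N):\{0,1\}^N\to\{0,1\}^N$ be a synchronously updated linear Boolean network, where each $f_i(\mathbf x)=\sum_{j\in S_i}x_j \pmod 2$ for a subset $S_i\subseteq\{1,\dots,N\}$ of size $n_i$ (the in-degree of node $i$). For $1\le m\le N$, let $(\mathbf x,\mathbf y)$ be a uniformly random pair of states in $\{0,1\}^N$ with Hamming distance $d(\mathbf x,\mathbf y)=m$. Then $$D(F,m) := \mathbb{E}\Big[d\big(F(\mathbf x),F(\mathbf y)\big) \ \big| \ d(\mathbf x,\mathbf y) = m\Big] = \sum_{i=1}^N\mathbb{P}\left(f_i(\mathbf x) \neq f_i(\mathbf y) \ \big| \ d(\mathbf x,\mathbf y) =m \right) = \sum_{i=1}^N \sum_{\substack{1\le c\le m\\ c\text{ odd}}} H_{N,m,n_i}(c),$$ where $$H_{N,m,n_i}(c) = \frac{\binom mc \binom{N-m}{n_i-c}}{\binom N{n_i}} = \frac{\binom {n_i}c \binom{N-n_i}{m-c}}{\binom N{m}}$$ is the hypergeometric probability mass function.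
   Context: $d(\cdot,\cdot)$ denotes Hamming distance on $\{0,1\}^N$. Binomial coefficients $\binom ab$ are taken to be $0$ when $b<0$ or $b>a$. The quantity $D(F,m)$ is called the Derrida value of $F$ at $m$. *)

(* Defs.v *)
From mathcomp Require Import all_boot all_order all_algebra.
Set Implicit Arguments. Unset Strict Implicit. Unset Printing Implicit Defensive.
Import Order.TTheory GRing.Theory Num.Theory.

Definition state (N : nat) := {ffun 'I_N -> bool}.

Definition hamming N (x y : state N) : nat := #|[set i | x i != y i]|.

Definition linear_net N (S : 'I_N -> {set 'I_N}) (x : state N) : state N :=
  [ffun i => \big[addb/false]_(j in S i) x j].

(* All ordered pairs of states at Hamming distance m (uniform distribution). *)
Definition pairs_at N (m : nat) : {set state N * state N} :=
  [set p | hamming p.1 p.2 == m].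

Definition derrida N (F : state N -> state N) (m : nat) : rat :=
  ((\sum_(p in pairs_at N m) (hamming (F p.1) (F p.2))%:R)
     / (#|pairs_at N m|)%:R)%R.

Definition node_flip_prob N (F : state N -> state N) (i : 'I_N) (m : nat) : rat :=
  ((#|[set p in pairs_at N m | F p.1 i != F p.2 i]|)%:R
     / (#|pairs_at N m|)%:R)%R.

(* Binomial coefficient with integer lower index, 0 when b < 0 (and, as usual
   for 'C, when b > a). *)
Definition binz (a : nat) (b : int) : nat :=
  match b with Posz k => 'C(a, k) | Negz _ => 0 end.

Definition hyper1 (N m n c : nat) : rat :=
  ((binz m c * binz (N - m) (n%:Z - c%:Z))%:R / ('C(N, n))%:R)%R.

Definition hyper2 (N m n c : nat) : rat :=
  ((binz n c * binz (N - n) (m%:Z - c%:Z))%:R / ('C(N, m))%:R)%R.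

(* Main.v *)
Require Import Defs.
From mathcomp Require Import all_boot all_order all_algebra zify ring.
Import Order.TTheory GRing.Theory Num.Theory.
Set Implicit Arguments. Unset Strict Implicit.

Definition Dset N (p : state N * state N) : {set 'I_N} := [set j | p.1 j != p.2 j].

Lemma xor_big (T : finType) (A : {set T}) (b : T -> bool) :
  \big[addb/false]_(j in A) b j = odd #|[set j in A | b j]|.
Proof.
transitivity (odd (\sum_(j in A) nat_of_bool (b j))).
  rewrite (big_morph odd oddD (erefl (odd 0))).
  by apply: eq_bigr => j _; rewrite oddb.
congr odd. rewrite -sum1_card (big_mkcond (fun j => j \in A)) [RHS](big_mkcond (fun j => j \in _)) /=.
apply: eq_bigr => j _; rewrite !inE; by case: (j \in A); case: (b j).
Qed.

Lemma flip_odd N (S : 'I_N -> {set 'I_N}) (p : state N * state N) i :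
  (linear_net S p.1 i != linear_net S p.2 i) = odd #|S i :&: Dset p|.
Proof.
have nx (a b : bool) : (a != b) = a (+) b by case: a; case: b.
rewrite /linear_net !ffunE nx -big_split /= xor_big.
congr (odd _); apply: eq_card => j; rewrite !inE.
by case: (j \in S i); case: (p.1 j); case: (p.2 j).
Qed.

Lemma count_pairs N (P : pred {set 'I_N}) :
  #|[set p : state N * state N | P (Dset p)]| = #|{: state N}| * #|[set D | P D]|.
Proof.
pose g (q : state N * {set 'I_N}) : state N * state N :=
  (q.1, [ffun j => q.1 j (+) (j \in q.2)]).
have gD q : Dset (g q) = q.2.
  apply/setP => j; rewrite !inE /= ffunE.
  by case: (q.1 j); case: (j \in q.2).
have ginj : injective g.
  move=> [x1 D1] [x2 D2] E.
  have E1 : x1 = x2 by move: (congr1 fst E).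
  have E2 : D1 = D2 by move: (congr1 (@Dset N) E); rewrite !gD.
  by rewrite E1 E2.
have -> : [set p : state N * state N | P (Dset p)] = g @: setX [set: state N] [set D | P D].
  apply/setP => p; rewrite inE; apply/idP/imsetP.
    move=> HP; exists (p.1, Dset p).
      by rewrite !inE.
    case: p HP => x y HP; rewrite /g /=; congr pair; apply/ffunP => j.
    by rewrite ffunE !inE /=; case: (x j); case: (y j).
  by move=> [q]; rewrite !inE => /andP[_ Hq] ->; rewrite gD.
by rewrite card_imset // cardsX cardsT.
Qed.

Lemma count_split (T : finType) (S : {set T}) m c : (c <= m)%N ->
  #|[set D : {set T} | (#|D| == m) && (#|S :&: D| == c)]|
  = ('C(#|S|, c) * 'C(#|~: S|, m - c))%N.
Proof.
move=> cm.
have key (A B : {set T}) : A \subset S -> B \subset ~: S ->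
   (S :&: (A :|: B) = A) /\ ((A :|: B) :\: S = B) /\ (A :&: B = set0).
  move=> /subsetP HA /subsetP HB; split; [|split]; apply/setP => j;
  (have h1 : (j \in A) ==> (j \in S) by apply/implyP; apply: HA);
  (have h2 : (j \in B) ==> (j \notin S) by apply/implyP => /HB; rewrite inE);
  rewrite !inE; move: h1 h2;
  by case: (j \in A); case: (j \in B); case: (j \in S).
pose f (q : {set T} * {set T}) := q.1 :|: q.2.
have -> : [set D : {set T} | (#|D| == m) && (#|S :&: D| == c)] =
   f @: setX [set A : {set T} | A \subset S & #|A| == c] [set B : {set T} | B \subset ~: S & #|B| == m - c].
  apply/setP => D; rewrite inE; apply/idP/imsetP.
    move=> /andP[/eqP HD /eqP HS]; exists (S :&: D, D :\: S).
      rewrite !inE subsetIl HS eqxx /=; apply/andP; split.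
        by apply/subsetP => j; rewrite !inE => /andP[].
      have := cardsID S D. rewrite setIC HS HD => <-. by rewrite addKn.
    rewrite /f /=; apply/setP => j; rewrite !inE.
    by case: (j \in S); case: (j \in D).
  move=> [[A B]]; rewrite !inE /= => /andP[/andP[HA /eqP cA] /andP[HB /eqP cB]] ->.
  have [k1 [k2 k3]] := key A B HA HB.
  rewrite /f /= k1 cA eqxx andbT cardsU k3 cards0 subn0 cA cB.
  by apply/eqP; rewrite subnKC.
rewrite card_in_imset.
  by rewrite cardsX cards_draws cards_draws.
move=> [A1 B1] [A2 B2]; rewrite !inE /= => /andP[/andP[HA1 _] /andP[HB1 _]]
   /andP[/andP[HA2 _] /andP[HB2 _]]; rewrite /f /= => E.
have [k1 [k2 _]] := key A1 B1 HA1 HB1.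
have [l1 [l2 _]] := key A2 B2 HA2 HB2.
by congr pair; [rewrite -k1 E l1 | rewrite -k2 E l2].
Qed.


Lemma binzB a n c : binz a (n%:Z - c%:Z) = if (c <= n)%N then 'C(a, n - c) else 0%N.
Proof.
case: leqP => h; first by rewrite subzn.
case E: (n%:Z - c%:Z)%R => [k|k] //.
have : (0 <= n%:Z - c%:Z)%R by rewrite E.
rewrite subr_ge0 lez_nat => h2. by move: (leq_trans h h2); rewrite ltnn.
Qed.

Lemma hyper_nat N m n c : (n <= N)%N -> (c <= m)%N -> (m <= N)%N -> (c <= n)%N ->
  (n - c <= N - m)%N ->
  ('C(m, c) * 'C(N - m, n - c) * 'C(N, m) = 'C(n, c) * 'C(N - n, m - c) * 'C(N, n))%N.
Proof.
move=> nN cm mN cn h.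
set k := (N - m - (n - c))%N.
have hk : (N - n - (m - c) = k)%N by rewrite /k; lia.
have pos : (0 < c`! * (m - c)`! * (n - c)`! * k`!)%N.
  by rewrite !muln_gt0 !fact_gt0.
apply/eqP; rewrite -(eqn_pmul2r pos); apply/eqP.
have e1 := bin_fact cm. have e2 := bin_fact h. have e3 := bin_fact mN.
have f1 := bin_fact cn. have f3 := bin_fact nN.
have h' : (m - c <= N - n)%N by lia.
have f2 := bin_fact h'. rewrite hk in f2.
have hk2 : (N - m - (n - c))%N = k by [].
rewrite hk2 in e2.
transitivity ('C(N, m) * ('C(m, c) * (c`! * (m - c)`!)) * ('C(N - m, n - c) * ((n - c)`! * k`!)))%N.
  ring.
rewrite e1 e2 -mulnA e3.
transitivity ('C(N, n) * ('C(n, c) * (c`! * (n - c)`!)) * ('C(N - n, m - c) * ((m - c)`! * k`!)))%N;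
  last ring.
by rewrite f1 f2 -mulnA f3.
Qed.

Lemma hyper_eq N m n c : (n <= N)%N -> (c <= m)%N -> (m <= N)%N ->
  hyper1 N m n c = hyper2 N m n c.
Proof.
move=> nN cm mN.
rewrite /hyper1 /hyper2 /= !binzB cm.
case: (leqP c n) => cn; last by rewrite muln0 (bin_small cn) mul0n !mul0r.
case: (leqP (n - c) (N - m)) => h.
  have bN : ('C(N, n)%:R != 0 :> rat)%R by rewrite pnatr_eq0 -lt0n bin_gt0.
  have bM : ('C(N, m)%:R != 0 :> rat)%R by rewrite pnatr_eq0 -lt0n bin_gt0.
  apply/eqP; rewrite eqr_div // -!natrM; apply/eqP; congr (_%:R)%R.
  exact: hyper_nat.
have h' : (N - n < m - c)%N by lia.
by rewrite (bin_small h) (bin_small h') !muln0 !mul0r.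
Qed.

Lemma card_set_sum (T : finType) (b : pred T) :
  #|[set x | b x]| = (\sum_x (b x : nat))%N.
Proof.
rewrite -sum1_card big_mkcond /=; apply: eq_bigr => x _; rewrite inE.
by case: (b x).
Qed.

Lemma sum_odd_ind k m : (k <= m)%N ->
  (\sum_(1 <= c < m.+1 | odd c) (k == c : nat))%N = odd k.
Proof.
move=> km; rewrite big_mkcond /=.
case ok: (odd k).
  have kin : k \in index_iota 1 m.+1.
    rewrite mem_index_iota ltnS km andbT lt0n; apply/negP => /eqP k0.
    by rewrite k0 in ok.
  rewrite (bigD1_seq k kin (iota_uniq _ _)) /= ok eqxx /= big1 // => c ck.
  by rewrite eq_sym (negbTE ck); case: (odd c).
rewrite big1 // => c _; case: eqP => [<-|]; first by rewrite ok.
by case: (odd c).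
Qed.

Lemma sum_odd (T : finType) (Q : pred T) (k : T -> nat) m :
  (forall D, Q D -> k D <= m)%N ->
  #|[set D | Q D && odd (k D)]| =
  (\sum_(1 <= c < m.+1 | odd c) #|[set D | Q D && (k D == c)]|)%N.
Proof.
move=> hk; rewrite card_set_sum.
under [RHS]eq_bigr do rewrite card_set_sum.
rewrite exchange_big /=; apply: eq_bigr => D _.
case qD: (Q D) => /=; last by rewrite big1.
by rewrite sum_odd_ind // hk.
Qed.

Lemma part1 N (F : state N -> state N) m :
  derrida F m = (\sum_(i < N) node_flip_prob F i m)%R.
Proof.
rewrite /derrida /node_flip_prob -mulr_suml -!natr_sum; congr (_%:R / _)%R.
under eq_bigr do rewrite /hamming card_set_sum.
under [RHS]eq_bigr do rewrite card_set_sum.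
rewrite exchange_big /=; apply: eq_bigr => i _.
rewrite big_mkcond /=; apply: eq_bigr => p _.
by case: (p \in pairs_at N m).
Qed.

Lemma part2 N (S : 'I_N -> {set 'I_N}) m i : (1 <= m <= N)%N ->
  node_flip_prob (linear_net S) i m
  = (\sum_(1 <= c < m.+1 | odd c) hyper1 N m #|S i| c)%R.
Proof.
move=> /andP[m1 mN].
have eP : pairs_at N m = [set p | (fun D : {set 'I_N} => #|D| == m) (Dset p)].
  by apply/setP => p; rewrite !inE.
have eQ : [set p in pairs_at N m | linear_net S p.1 i != linear_net S p.2 i]
   = [set p | (fun D : {set 'I_N} => (#|D| == m) && odd #|S i :&: D|) (Dset p)].
  by apply/setP => p; rewrite !inE flip_odd.
rewrite /node_flip_prob eQ eP (count_pairs (fun D : {set 'I_N} => (#|D| == m) && odd #|S i :&: D|)) (count_pairs (fun D : {set 'I_N} => #|D| == m)) card_draws card_ord.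
have K0 : (#|{: state N}|%:R != 0 :> rat)%R.
  by rewrite pnatr_eq0 -lt0n; apply/card_gt0P; exists [ffun=> false].
rewrite !natrM -mulf_div divff // mul1r.
rewrite (@sum_odd _ (fun D : {set 'I_N} => #|D| == m) (fun D : {set 'I_N} => #|S i :&: D|) m); last first.
  by move=> D /eqP <-; apply: subset_leq_card; apply: subsetIr.
rewrite natr_sum mulr_suml big_nat_cond [RHS]big_nat_cond.
apply: eq_bigr => c /andP[/andP[c1 cm] _]; rewrite ltnS in cm.
have nN : (#|S i| <= N)%N by rewrite -[X in (_ <= X)%N]card_ord max_card.
rewrite hyper_eq // /hyper2 /= binzB cm count_split //.
have -> : #|~: S i| = (N - #|S i|)%N.
  have h : (#|S i| + #|~: S i| = N)%N by rewrite cardsC card_ord.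
  lia.
by [].
Qed.

Theorem mainTheorem2 (N : nat) (S : 'I_N -> {set 'I_N}) (m : nat) :
  (1 <= N)%N -> (1 <= m <= N)%N ->
  [/\ derrida (linear_net S) m
        = (\sum_(i < N) node_flip_prob (linear_net S) i m)%R,
      (\sum_(i < N) node_flip_prob (linear_net S) i m)%R
        = (\sum_(i < N) \sum_(1 <= c < m.+1 | odd c) hyper1 N m #|S i| c)%R
    & forall (i : 'I_N) (c : nat), (1 <= c <= m)%N ->
        hyper1 N m #|S i| c = hyper2 N m #|S i| c].
Proof.
move=> N1 hm; split.
- exact: part1.
- by apply: eq_bigr => i _; apply: part2.
- move=> i c /andP[_ cm]; move: hm => /andP[_ mN].
  apply: hyper_eq => //.
  by rewrite -[X in (_ <= X)%N]card_ord max_card.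
Qed.
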